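(* Let $y\in\mathbb{R}^N$, $\lambda>0$ and $\alpha\geq 0$. Let $$F(x)=\|x\|_1-\alpha\|x\|_2+\frac{1}{2\lambda}\|x-y\|_2^2,$$ and let $x^*$ be any minimizer of $F$ over $\mathbb{R}^N$. Then for every $x\in\mathbb{R}^N$, $$F(x^* )-F(x)\leq \min\left(\frac{\alpha}{2\|x^*\|_2}-\frac{1}{2\lambda},\,0\right)\|x^*-x\|_2^2,$$ where, when $x^*=0$, the quantity $\alpha/0$ is interpreted as $0$ if $\alpha=0$ and as $+\infty$ if $\alpha>0$. *)

(* Defs.v *)
From mathcomp Require Import all_boot all_order all_algebra.
From mathcomp Require Import reals.
Set Implicit Arguments. Unset Strict Implicit. Unset Printing Implicit Defensive.
Import Order.TTheory GRing.Theory Num.Theory.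
Local Open Scope ring_scope.

Definition norm1 (R : realType) (N : nat) (x : 'rV[R]_N) : R :=
  \sum_(i < N) `|x 0 i|.

Definition norm2 (R : realType) (N : nat) (x : 'rV[R]_N) : R :=
  Num.sqrt (\sum_(i < N) (x 0 i) ^+ 2).

Definition Fobj (R : realType) (N : nat) (alpha lambda : R) (y x : 'rV[R]_N) : R :=
  norm1 x - alpha * norm2 x + (2 * lambda)^-1 * (norm2 (x - y)) ^+ 2.

Definition is_minimizer (R : realType) (N : nat) (F : 'rV[R]_N -> R) (xs : 'rV[R]_N) : Prop :=
  forall x : 'rV[R]_N, F xs <= F x.

(* The coefficient min(alpha/(2||x*||_2) - 1/(2 lambda), 0), with the
   convention alpha/0 = 0 if alpha = 0 and alpha/0 = +oo if alpha > 0
   (in which case min(+oo, 0) = 0). *)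
Definition coef (R : realType) (N : nat) (alpha lambda : R) (xs : 'rV[R]_N) : R :=
  if norm2 xs == 0 then
    (if alpha == 0 then Num.min (- (2 * lambda)^-1) 0 else 0)
  else Num.min (alpha / (2 * norm2 xs) - (2 * lambda)^-1) 0.

(* Main.v *)
Require Import Defs.
From mathcomp Require Import all_boot all_order all_algebra.
From mathcomp Require Import reals ring lra.
Import Order.TTheory GRing.Theory Num.Theory.
Set Implicit Arguments. Unset Strict Implicit. Unset Printing Implicit Defensive.
Local Open Scope ring_scope.

Section H.
Variables (R : realType) (N : nat).
Implicit Types (a b c : 'rV[R]_N).

Definition Q a : R := \sum_(i < N) (a 0 i) ^+ 2.
Definition dot a b : R := \sum_(i < N) (a 0 i * b 0 i).

Lemma Q_ge0 a : 0 <= Q a.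
Proof. by apply: sumr_ge0 => i _; rewrite sqr_ge0. Qed.

Lemma norm2_sq a : norm2 a ^+ 2 = Q a.
Proof. by rewrite /norm2 sqr_sqrtr // Q_ge0. Qed.

Lemma norm2_ge0 a : 0 <= norm2 a.
Proof. exact: sqrtr_ge0. Qed.

Lemma dotQ a : dot a a = Q a.
Proof. by apply: eq_bigr => i _; rewrite expr2. Qed.

Lemma Q_expand a b : Q (a - b) = Q a + Q b - 2 * dot a b.
Proof.
rewrite /Q /dot mulr_sumr -big_split -sumrB /=; apply: eq_bigr => i _.
rewrite !mxE; ring.
Qed.

Lemma Q_comb a b c t : Q ((1 - t) *: a + t *: b - c) =
  (1 - t) * Q (a - c) + t * Q (b - c) - t * (1 - t) * Q (a - b).
Proof.
rewrite /Q !mulr_sumr -big_split -sumrB /=; apply: eq_bigr => i _.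
rewrite !mxE; ring.
Qed.

Lemma dot_comb a b t : dot a ((1 - t) *: a + t *: b) = (1 - t) * Q a + t * dot a b.
Proof.
rewrite /Q /dot !mulr_sumr -big_split /=; apply: eq_bigr => i _.
rewrite !mxE; ring.
Qed.

Lemma norm1_comb a b t : 0 <= t <= 1 ->
  norm1 ((1 - t) *: a + t *: b) <= (1 - t) * norm1 a + t * norm1 b.
Proof.
move=> /andP[t0 t1].
rewrite /norm1 !mulr_sumr -big_split /=; apply: ler_sum => i _.
rewrite !mxE; apply: le_trans (ler_normD _ _) _.
by rewrite !normrM (ger0_norm t0) ger0_norm ?subr_ge0.
Qed.

Lemma CS a b : dot a b <= norm2 a * norm2 b.
Proof.
set s := norm2 a; set r := norm2 b.
have hs := norm2_ge0 a; have hr := norm2_ge0 b.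
have hsq : 0 <= Q ((r *: a) - (s *: b)).
  exact: Q_ge0.
have e : Q ((r *: a) - (s *: b)) = 2 * (r * s) * (r * s - dot a b).
  rewrite Q_expand.
  have -> : Q (r *: a) = r^+2 * Q a.
    by rewrite /Q mulr_sumr; apply: eq_bigr => i _; rewrite !mxE exprMn.
  have -> : Q (s *: b) = s^+2 * Q b.
    by rewrite /Q mulr_sumr; apply: eq_bigr => i _; rewrite !mxE exprMn.
  have -> : dot (r *: a) (s *: b) = r * s * dot a b.
    by rewrite /dot mulr_sumr; apply: eq_bigr => i _; rewrite !mxE; ring.
  rewrite -!norm2_sq -/s -/r; ring.
have [rs0|rs0] := eqVneq (r * s) 0.
  move: rs0 => /eqP; rewrite mulf_eq0 => /orP[] /eqP z.
  - have Qb : Q b = 0 by rewrite -norm2_sq -/r z expr0n.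
    have bi : forall i, b 0 i = 0.
      move=> i; apply/eqP; rewrite -sqrf_eq0; apply/eqP.
      move/eqP: Qb; rewrite psumr_eq0 => [/allP H|j _]; last by rewrite sqr_ge0.
      by apply/eqP; apply: H; rewrite mem_index_enum.
    rewrite /dot big1 ?z ?mulr0 // => i _; by rewrite bi mulr0.
  - have Qb : Q a = 0 by rewrite -norm2_sq -/s z expr0n.
    have bi : forall i, a 0 i = 0.
      move=> i; apply/eqP; rewrite -sqrf_eq0; apply/eqP.
      move/eqP: Qb; rewrite psumr_eq0 => [/allP H|j _]; last by rewrite sqr_ge0.
      by apply/eqP; apply: H; rewrite mem_index_enum.
    rewrite /dot big1 ?z ?mul0r // => i _; by rewrite bi mul0r.
have rsp : 0 < r * s by rewrite lt_def rs0 mulr_ge0.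
rewrite e in hsq.
have h2 : 0 < 2 * (r * s) by rewrite mulr_gt0.
by rewrite mulrC -subr_ge0; move: hsq; rewrite (pmulr_rge0 _ h2).
Qed.
End H.
Lemma dotC (R : realType) (N : nat) (a b : 'rV[R]_N) : dot a b = dot b a.
Proof. by apply: eq_bigr => i _; rewrite mulrC. Qed.

Lemma limit_step (R : realType) (V A B : R) : 0 <= B ->
  (forall t : R, 0 < t -> t <= 1 -> V <= A + t * B) -> V <= A.
Proof.
move=> hB H; case: (leP V A) => // hlt; exfalso.
set d := V - A.
have hd : 0 < d by rewrite subr_gt0.
have hd1 : 0 < d + B + 1 by lra.
set t := d / (d + B + 1).
have ht : t * (d + B + 1) = d by rewrite /t mulfVK // gt_eqF.
have t0 : 0 < t by rewrite /t divr_gt0.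
have t1 : t <= 1 by rewrite /t ler_pdivrMr // mul1r; lra.
have := H t t0 t1.
have := mulr_gt0 t0 hd.
rewrite /d in ht hd *.
move: ht; rewrite !mulrDr mulr1 => ht.
lra.
Qed.

Theorem lemma2 (R : realType) (N : nat) (y : 'rV[R]_N) (lambda alpha : R)
  (hlambda : 0 < lambda) (halpha : 0 <= alpha) (xs : 'rV[R]_N)
  (hmin : is_minimizer (Fobj alpha lambda y) xs) :
  forall x : 'rV[R]_N,
    Fobj alpha lambda y xs - Fobj alpha lambda y x
      <= coef alpha lambda xs * (norm2 (xs - x)) ^+ 2.
Proof.
move=> x.
set c := (2 * lambda)^-1.
have hc : 0 < c by rewrite /c invr_gt0 mulr_gt0.
set s := norm2 xs.
have hs : 0 <= s := norm2_ge0 xs.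
have h0 : Fobj alpha lambda y xs - Fobj alpha lambda y x <= 0.
  by rewrite subr_le0; apply: hmin.
rewrite norm2_sq.
set D2 := Q (xs - x).
have hD : 0 <= D2 := Q_ge0 _.
have core : forall k, 0 <= k -> alpha = k * s ->
    Fobj alpha lambda y xs - Fobj alpha lambda y x <= (k / 2 - c) * D2.
  move=> k hk hak.
  have hdot : forall z, k * dot xs z <= alpha * norm2 z.
    by move=> z; rewrite hak -mulrA ler_wpM2l // CS.
  apply: (@limit_step _ _ _ (c * D2)); first by rewrite mulr_ge0 // ltW.
  move=> t t0 t1.
  set xt := (1 - t) *: xs + t *: x.
  have hm := hmin xt.
  have hn1 := @norm1_comb R N xs x t; move: hn1; rewrite (ltW t0) t1 => /(_ isT) hn1.
  have hq := Q_comb xs x y t; rewrite -/xt -/D2 in hq.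
  have hd := hdot xt; rewrite dot_comb in hd.
  move: hm; rewrite /Fobj !norm2_sq -/c -/s hq => hm.
  have hQs : Q xs = s ^+ 2 by rewrite norm2_sq.
  have hQx : Q x = norm2 x ^+ 2 by rewrite norm2_sq.
  have hD2 : D2 = Q x + Q xs - 2 * dot xs x.
    by rewrite /D2 Q_expand (addrC (Q xs)).
  have hnx := norm2_ge0 x.
  have hsq : 0 <= k * (s - norm2 x) ^+ 2 by rewrite mulr_ge0 // sqr_ge0.
  set n1s := norm1 xs in hm hn1 *. set n1x := norm1 x in hm hn1 *.
  set nx := norm2 x in hQx hnx hsq *. set nt := norm2 xt in hm hd.
  set Qys := Q (xs - y) in hm *. set Qyx := Q (x - y) in hm *.
  set d := dot xs x in hd hD2 *.
  set QS := Q xs in hQs hd hD2 *. set QX := Q x in hQx hD2.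
  set Nt1 := norm1 xt in hm hn1.
  have key : t * ((n1s - alpha * s + c * Qys) - (n1x - k * d + c * Qyx)
      + c * (1 - t) * D2) <= 0.
    have hks : alpha * s = k * QS by rewrite hak hQs; ring.
    rewrite hks.
    lra.
  have key2 : (n1s - alpha * s + c * Qys) - (n1x - k * d + c * Qyx)
      + c * (1 - t) * D2 <= 0.
    by move: key; rewrite pmulr_rle0.
  have e3 : k / 2 * D2 - (alpha * nx - k * d) = k * (s - nx) ^+ 2 / 2.
    by rewrite hak hD2 hQx hQs; field.
  have h3 : 0 <= k * (s - nx) ^+ 2 / 2 by rewrite divr_ge0.
  lra.
rewrite /coef -/s -/c.
have [s0|s0] := eqVneq s 0; last first.
  have hk : 0 <= alpha / s by rewrite divr_ge0.
  have := core _ hk (esym (divfK s0 alpha)).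
  have -> : alpha / s / 2 = alpha / (2 * s) by rewrite invfM; ring.
  set a := alpha / (2 * s) - c => ha.
  have [al|al] := leP a 0.
    by [].
  by rewrite mul0r.
have [a0|a0] := eqVneq alpha 0; last by rewrite mul0r.
have := core 0 (lexx 0); rewrite a0 mul0r => /(_ erefl).
have hc' : - c <= 0 by rewrite oppr_le0 ltW.
by rewrite (min_l hc') mul0r add0r mulNr.
Qed.
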